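(* Let $x\in[0,1)$, $\lambda>0$ and $\alpha\in(0,1)$, and suppose that either (1) $\alpha>\frac{1}{1-x}\left[\frac{1}{\lambda}-x\right]$, or (2) $\alpha\in\left(0,1-\frac{1}{\lambda(1-x)}\right)$. Then the truth has a unique globally stable steady-state prevalence $\theta_0$, and it is positive. Moreover, whenever these conditions imply that the rumor is also endemic ($\theta_1>0$), this steady state $\theta_0$, viewed as the solution of $\theta_0=H(\theta_0)$, is strictly increasing in $\theta_1$.
   Context: Model: a continuum population of mass $1$; a mass $x$ of agents are of type $0$ (biased towards the truth) and $1-x$ of type $1$ (biased towards the rumor). In each type a fraction $\alpha$ of agents inspect messages; non-inspecting agents believe only the message matching their type, inspecting agents believe and transmit the truth upon receiving either message. With $k$ meetings per period, transmission rate $\nu$, death rate $\delta$ of informed agents, set $\lambda=k\nu/\delta$. Let $\rho^{\alpha}_{0,0},\rho^{1-\alpha}_{0,0},\rho^{\alpha}_{1,0},\rho^{1-\alpha}_{1,1}$ be the fractions of inspecting type-0 agents believing the truth, non-inspecting type-0 agents believing the truth, inspecting type-1 agents believing the truth, and non-inspecting type-1 agents believing the rumor; truth prevalence is $\theta_0=x[\alpha\rho^{\alpha}_{0,0}+(1-\alpha)\rho^{1-\alpha}_{0,0}]+(1-x)\alpha\rho^{\alpha}_{1,0}$ and rumor prevalence is $\theta_1=(1-x)(1-\alpha)\rho^{1-\alpha}_{1,1}$. Dynamics: $\dot\rho^{\alpha}_{0,0}=x\alpha[(1-\rho^{\alpha}_{0,0})k\nu(\theta_0+\theta_1)-\rho^{\alpha}_{0,0}\delta]$,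 $\dot\rho^{1-\alpha}_{0,0}=x(1-\alpha)[(1-\rho^{1-\alpha}_{0,0})k\nu\theta_0-\rho^{1-\alpha}_{0,0}\delta]$, $\dot\rho^{\alpha}_{1,0}=(1-x)\alpha[(1-\rho^{\alpha}_{1,0})k\nu(\theta_0+\theta_1)-\rho^{\alpha}_{1,0}\delta]$, $\dot\rho^{1-\alpha}_{1,1}=(1-x)(1-\alpha)[(1-\rho^{1-\alpha}_{1,1})k\nu\theta_1-\rho^{1-\alpha}_{1,1}\delta]$. The steady-state rumor prevalence is $\theta_1=\max\{(1-\alpha)(1-x)-1/\lambda,0\}$ (the rumor is endemic iff this is positive). A steady-state truth prevalence is a fixed point $\theta_0=H(\theta_0)$ of $H(\theta_0)=\alpha\frac{\lambda(\theta_0+\theta_1)}{1+\lambda(\theta_0+\theta_1)}+x(1-\alpha)\frac{\lambda\theta_0}{1+\lambda\theta_0}$. *)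

(* Defs.v *)
From Stdlib Require Import Reals Lra.
From Coquelicot Require Import Coquelicot.
Open Scope R_scope.

(* Truth prevalence from the four belief fractions
   a = rho^alpha_{0,0}, b = rho^{1-alpha}_{0,0}, c = rho^alpha_{1,0}. *)
Definition theta0 (x alpha a b c : R) : R :=
  x * (alpha * a + (1 - alpha) * b) + (1 - x) * alpha * c.

(* Rumor prevalence from d = rho^{1-alpha}_{1,1}. *)
Definition theta1 (x alpha d : R) : R := (1 - x) * (1 - alpha) * d.

Definition theta1_ss (x alpha lam : R) : R :=
  Rmax ((1 - alpha) * (1 - x) - / lam) 0.

(* The map whose fixed points are the steady-state truth prevalences,
   given the rumor prevalence th1. *)
Definition H (x alpha lam th1 th0 : R) : R :=
  alpha * (lam * (th0 + th1) / (1 + lam * (th0 + th1)))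
  + x * (1 - alpha) * (lam * th0 / (1 + lam * th0)).

(* (a,b,c,d) is a solution of the dynamics on [0, +oo) with k meetings per
   period, transmission rate nu and death rate delta. *)
Definition is_solution (x alpha k nu delta : R) (a b c d : R -> R) : Prop :=
  forall t, 0 <= t ->
    let th0 := theta0 x alpha (a t) (b t) (c t) in
    let th1 := theta1 x alpha (d t) in
    is_derive a t (x * alpha * ((1 - a t) * k * nu * (th0 + th1) - a t * delta)) /\
    is_derive b t (x * (1 - alpha) * ((1 - b t) * k * nu * th0 - b t * delta)) /\
    is_derive c t ((1 - x) * alpha * ((1 - c t) * k * nu * (th0 + th1) - c t * delta)) /\
    is_derive d t ((1 - x) * (1 - alpha) * ((1 - d t) * k * nu * th1 - d t * delta)).

(* Main.v *)
Require Import Defs.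
From Stdlib Require Import Reals Lra Psatz List.
From Coquelicot Require Import Coquelicot.
Open Scope R_scope.
Import ListNotations.


Lemma deriv_cont (g : R -> R) t l : is_derive g t l ->
  forall e, 0 < e -> exists d, 0 < d /\ forall s, Rabs (s - t) < d -> Rabs (g s - g t) < e.
Proof.
intros Hd e He. apply is_derive_Reals in Hd. destruct (Hd 1 Rlt_0_1) as [dl Hdl].
assert (Hp : 0 < Rabs l + 1) by (pose proof (Rabs_pos l); lra).
exists (Rmin dl (e / (Rabs l + 1))). split.
{ apply Rmin_pos; [apply cond_pos|]. apply Rdiv_lt_0_compat; lra. }
intros s Hs. destruct (Req_dec s t) as [->|Hne].
{ replace (g t - g t) with 0 by ring. rewrite Rabs_R0; lra. }
assert (Hh : s - t <> 0) by lra.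
assert (Hs1 : Rabs (s - t) < dl) by (eapply Rlt_le_trans; [apply Hs|apply Rmin_l]).
assert (Hs2 : Rabs (s - t) < e / (Rabs l + 1)) by (eapply Rlt_le_trans; [apply Hs|apply Rmin_r]).
specialize (Hdl (s - t) Hh Hs1). replace (t + (s - t)) with s in Hdl by ring.
assert (Hq : Rabs ((g s - g t) / (s - t)) < Rabs l + 1).
{ pose proof (Rabs_triang_inv ((g s - g t) / (s - t)) l). lra. }
replace (g s - g t) with ((g s - g t) / (s - t) * (s - t)) by (field; auto).
rewrite Rabs_mult.
assert (Hpos : 0 < Rabs (s - t)) by (apply Rabs_pos_lt; auto).
apply Rlt_le_trans with ((Rabs l + 1) * Rabs (s - t)).
{ apply Rmult_lt_compat_r; auto. }
apply Rmult_le_reg_r with (/ (Rabs l + 1)). apply Rinv_0_lt_compat; lra.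
replace ((Rabs l + 1) * Rabs (s - t) * / (Rabs l + 1)) with (Rabs (s - t)) by (field; lra).
unfold Rdiv in Hs2. lra.
Qed.

Lemma local_neg (g : R -> R) t l : is_derive g t l -> l < 0 -> g t = 0 ->
  exists eta, 0 < eta /\ forall s, t < s < t + eta -> g s <= 0.
Proof.
intros Hd Hl H0. apply is_derive_Reals in Hd. destruct (Hd (-l/2)) as [dl Hdl]; [lra|].
exists dl; split; [apply cond_pos|]. intros s Hs.
assert (Hh: s - t <> 0) by lra.
assert (Ha: Rabs (s-t) < dl) by (rewrite Rabs_right; lra).
specialize (Hdl (s - t) Hh Ha). replace (t + (s-t)) with s in Hdl by ring.
rewrite H0 in Hdl. apply Rabs_def2 in Hdl. destruct Hdl as [H1 H2].
assert (Hq : g s / (s - t) < 0) by lra.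
replace (g s) with (g s / (s - t) * (s - t)) by (field; auto).
assert (0 < s - t) by lra. nra.
Qed.

Lemma local_neg_strict (g : R -> R) t l : is_derive g t l -> g t < 0 ->
  exists eta, 0 < eta /\ forall s, Rabs (s - t) < eta -> g s <= 0.
Proof.
intros Hd Hg. destruct (deriv_cont g t l Hd (- g t)) as [d [Hd0 Hd1]]; [lra|].
exists d; split; auto. intros s Hs. specialize (Hd1 s Hs). apply Rabs_def2 in Hd1. lra.
Qed.

Lemma barrier (gs : list (R -> R)) (t0 : R) :
  (forall g, In g gs -> forall t, t0 <= t -> exists l, is_derive g t l) ->
  (forall g, In g gs -> g t0 <= 0) ->
  (forall g, In g gs -> forall t, t0 <= t -> (forall h, In h gs -> h t <= 0) -> g t = 0 ->
      exists eta, 0 < eta /\ forall s, t < s < t + eta -> g s <= 0) ->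
  forall t, t0 <= t -> forall g, In g gs -> g t <= 0.
Proof.
intros Hd H0 Hf t1 Ht1 g1 Hg1.
destruct (Rle_dec (g1 t1) 0) as [|Hneg]; [auto|exfalso].
set (E := fun s => t0 <= s /\ forall u, t0 <= u <= s -> forall h, In h gs -> h u <= 0).
assert (HE : bound E).
{ exists t1. intros s [Hs1 Hs2]. destruct (Rle_dec s t1) as [|Hn]; auto. exfalso; apply Hneg.
  apply Hs2; auto; lra. }
assert (HEt0 : E t0).
{ split; [lra|]. intros u Hu h Hh. replace u with t0 by lra. auto. }
destruct (completeness E HE (ex_intro _ t0 HEt0)) as [T [HTub HTlub]].
assert (HT0 : t0 <= T) by (apply HTub; auto).
assert (Hbefore : forall u, t0 <= u < T -> forall h, In h gs -> h u <= 0).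
{ intros u Hu h Hh. destruct (Rle_dec (h u) 0) as [|Hn]; auto. exfalso.
  assert (T <= u); [|lra]. apply HTlub. intros s [Hs1 Hs2].
  destruct (Rle_dec s u) as [|Hn2]; auto. exfalso. apply Hn. apply Hs2; auto; lra. }
assert (HatT : forall h, In h gs -> h T <= 0).
{ intros h Hh. destruct (Rle_dec (h T) 0) as [|Hn]; auto. exfalso.
  destruct (Rle_lt_or_eq_dec _ _ HT0) as [Hlt|Heq].
  - destruct (Hd h Hh T HT0) as [l Hl].
    destruct (deriv_cont h T l Hl (h T)) as [d [Hd0 Hd1]]; [lra|].
    set (u := Rmax t0 (T - d/2)).
    assert (Hu1 : t0 <= u) by apply Rmax_l.
    assert (Hu2 : u < T) by (unfold u; apply Rmax_lub_lt; lra).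
    assert (Hu3 : Rabs (u - T) < d).
    { rewrite Rabs_left by lra. assert (T - d/2 <= u) by apply Rmax_r. lra. }
    specialize (Hd1 u Hu3). apply Rabs_def2 in Hd1.
    specialize (Hbefore u (conj Hu1 Hu2) h Hh). lra.
  - subst T. apply Hn, H0; auto. }
assert (Hafter : forall l, (forall h, In h l -> In h gs) ->
   exists eta, 0 < eta /\ forall h, In h l -> forall s, T < s < T + eta -> h s <= 0).
{ induction l as [|h l IH]; intros Hsub.
  - exists 1; split; [lra|]. intros h [].
  - destruct IH as [e1 [He1 Hl1]]. { intros h' Hh'. apply Hsub; right; auto. }
    assert (Hh : In h gs) by (apply Hsub; left; auto).
    assert (Hloc : exists eta, 0 < eta /\ forall s, T < s < T + eta -> h s <= 0).
    { destruct (Rle_lt_or_eq_dec _ _ (HatT h Hh)) as [Hlt|Heq].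
      - destruct (Hd h Hh T HT0) as [l0 Hl0].
        destruct (local_neg_strict h T l0 Hl0 Hlt) as [d [Hd0 Hd1]].
        exists d; split; auto. intros s Hs. apply Hd1. rewrite Rabs_right; lra.
      - apply Hf; auto. }
    destruct Hloc as [e2 [He2 Hl2]].
    exists (Rmin e1 e2). split; [apply Rmin_pos; auto|].
    intros h' [<-|Hin] s Hs.
    + apply Hl2. pose proof (Rmin_r e1 e2). lra.
    + apply Hl1; auto. pose proof (Rmin_l e1 e2). lra. }
destruct (Hafter gs (fun h H => H)) as [eta [Heta Haft]].
assert (HE2 : E (T + eta/2)).
{ split; [lra|]. intros u Hu h Hh.
  destruct (Rlt_le_dec u T) as [Hlt|Hge]; [apply Hbefore; auto; lra|].
  destruct (Rle_lt_or_eq_dec _ _ Hge) as [Hlt2|Heq]; [apply Haft; auto; lra|].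
  subst u; auto. }
apply HTub in HE2. lra.
Qed.
Lemma up_face K dl us Is w M M1 I eta eps :
 0<K -> 0<dl -> 0<us -> 0<Is -> 0<w -> (1-us)*K*Is = us*dl -> 1 < M1 <= M ->
 0 <= I <= M*Is + eta -> 0 <= eta < (M1-1)*us*Is -> eps <= w * Rmin (K*Is) dl ->
 w * (K*I*(1 - M*us) - M*us*dl) + eps*(M - M1)*us < 0.
Proof.
intros HK Hdl Hus HIs Hw Heq HM HI Heta Heps.
set (c := Rmin (K*Is) dl).
assert (Hc1 : c <= K*Is) by apply Rmin_l. assert (Hc2 : c <= dl) by apply Rmin_r.
assert (HF : K*I*(1 - M*us) - M*us*dl < - (M - M1)*us*c).
{ destruct (Rle_lt_dec 0 (1 - M*us)) as [Hs|Hs].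
  - assert (H1 : K*I*(1-M*us) <= K*(M*Is+eta)*(1-M*us)).
    { apply Rmult_le_compat_r; auto. apply Rmult_le_compat_l; lra. }
    assert (H2 : K*(M*Is+eta)*(1-M*us) - M*us*dl = -M*(M-1)*us*K*Is + K*eta*(1-M*us)).
    { replace (M*us*dl) with (M*(us*dl)) by ring. rewrite <- Heq. ring. }
    assert (H3 : K*eta*(1-M*us) <= K*eta).
    { assert (0 <= K*eta) by (apply Rmult_le_pos; lra).
      assert (0 <= M*us) by (apply Rmult_le_pos; lra).
      assert (0 <= K*eta*(M*us)) by (apply Rmult_le_pos; lra). nra. }
    assert (H4 : M*(M-1)*us*K*Is >= (M-1)*us*K*Is).
    { assert (0 <= (M-1)*us*K*Is) by (repeat apply Rmult_le_pos; lra). nra. }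
    assert (H5 : K*eta < K*((M1-1)*us*Is)) by (apply Rmult_lt_compat_l; lra).
    assert (H6 : (M-M1)*us*c <= (M-M1)*us*(K*Is)).
    { apply Rmult_le_compat_l; auto. apply Rmult_le_pos; lra. }
    nra.
  - assert (H1 : K*I*(1-M*us) <= 0).
    { assert (0 <= K*I) by nra. nra. }
    assert (H6 : (M-M1)*us*c <= (M-M1)*us*dl).
    { apply Rmult_le_compat_l; auto. apply Rmult_le_pos; lra. }
    assert (H7 : (M-M1)*us*dl < M*us*dl).
    { apply Rmult_lt_compat_r; auto. apply Rmult_lt_compat_r; lra. }
    lra. }
assert (H8 : eps*((M-M1)*us) <= w*c*((M-M1)*us)).
{ apply Rmult_le_compat_r; [apply Rmult_le_pos; lra|]. unfold c; lra. }
assert (H9 : w*(K*I*(1 - M*us) - M*us*dl) < w*(- (M - M1)*us*c)).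
{ apply Rmult_lt_compat_l; auto. }
lra.
Qed.

Lemma low_face K dl us Is w m m0 m1 I eps :
 0<K -> 0<dl -> 0<us<1 -> 0<Is -> 0<w -> (1-us)*K*Is = us*dl ->
 0 < m0 <= m -> m <= m1 < 1 -> m*Is <= I -> eps <= w*m0*K*Is ->
 w*(K*I*(1-m*us) - m*us*dl) - eps*(m1 - m)*us > 0.
Proof.
intros HK Hdl Hus HIs Hw Heq Hm Hm1 HI Heps.
assert (Hmu : 0 < 1 - m*us) by nra.
assert (H1 : K*(m*Is)*(1-m*us) <= K*I*(1-m*us)).
{ apply Rmult_le_compat_r; [lra|]. apply Rmult_le_compat_l; lra. }
assert (H2 : K*(m*Is)*(1-m*us) - m*us*dl = m*(1-m)*(us*K*Is)).
{ replace (m*us*dl) with (m*(us*dl)) by ring. rewrite <- Heq. ring. }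
assert (HP : 0 < us*K*Is) by (repeat apply Rmult_lt_0_compat; lra).
assert (H3 : m0*(1-m) <= m*(1-m)) by (apply Rmult_le_compat_r; lra).
assert (H4 : m0*(m1-m) < m0*(1-m)) by (apply Rmult_lt_compat_l; lra).
assert (H5 : w*(m0*(m1-m))*(us*K*Is) < w*(m*(1-m))*(us*K*Is)).
{ apply Rmult_lt_compat_r; auto. apply Rmult_lt_compat_l; lra. }
assert (H6 : eps*((m1-m)*us) <= w*m0*K*Is*((m1-m)*us)).
{ apply Rmult_le_compat_r; [apply Rmult_le_pos; lra|lra]. }
assert (H7 : w*(K*I*(1-m*us) - m*us*dl) >= w*(m*(1-m)*(us*K*Is))).
{ apply Rle_ge, Rmult_le_compat_l; lra. }
assert (E1 : w*m0*K*Is*((m1-m)*us) = w*(m0*(m1-m))*(us*K*Is)) by ring.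
assert (E2 : w*(m*(1-m))*(us*K*Is) = w*(m*(1-m)*(us*K*Is))) by ring.
lra.
Qed.
Lemma frac_lt a b c d e f : 0 < b -> 0 < e -> a*c*e < d*f*b -> a/b*c < d/e*f.
Proof.
intros Hb He H. apply Rmult_lt_reg_r with (b*e). nra.
replace (a/b*c*(b*e)) with (a*c*e) by (field; lra).
replace (d/e*f*(b*e)) with (d*f*b) by (field; lra). auto.
Qed.

Lemma frac_le a b c d e f : 0 < b -> 0 < e -> a*c*e <= d*f*b -> a/b*c <= d/e*f.
Proof.
intros Hb He H. apply Rmult_le_reg_r with (b*e). nra.
replace (a/b*c*(b*e)) with (a*c*e) by (field; lra).
replace (d/e*f*(b*e)) with (d*f*b) by (field; lra). auto.
Qed.

Lemma H_ratio x al lam s t1 t2 : 0<=x -> 0<al<1 -> 0<lam -> 0<=s -> 0<t1 -> t1<t2 ->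
  H x al lam s t2 * t1 < H x al lam s t1 * t2.
Proof.
intros Hx Hal Hl Hs Ht1 Ht12. unfold H.
assert (T1 : lam*(t2+s)/(1+lam*(t2+s)) * t1 < lam*(t1+s)/(1+lam*(t1+s)) * t2).
{ apply frac_lt; try nra.
  assert (E : lam*(t1+s)*t2*(1+lam*(t2+s)) - lam*(t2+s)*t1*(1+lam*(t1+s))
            = lam*(s*(t2-t1) + lam*((t1+s)*(t2+s))*(t2-t1))) by ring.
  assert (0 < lam*(s*(t2-t1) + lam*((t1+s)*(t2+s))*(t2-t1))).
  { apply Rmult_lt_0_compat; auto.
    assert (0 <= s*(t2-t1)) by nra.
    assert (0 < lam*((t1+s)*(t2+s))*(t2-t1)).
    { repeat apply Rmult_lt_0_compat; nra. }
    lra. }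
  lra. }
assert (T2 : lam*t2/(1+lam*t2) * t1 <= lam*t1/(1+lam*t1) * t2).
{ apply frac_le; try nra.
  assert (E : lam*t1*t2*(1+lam*t2) - lam*t2*t1*(1+lam*t1) = lam*lam*(t1*t2)*(t2-t1)) by ring.
  assert (0 <= lam*lam*(t1*t2)*(t2-t1)).
  { repeat apply Rmult_le_pos; nra. }
  lra. }
assert (Hw : 0 <= x*(1-al)) by nra.
assert (U1 : al*(lam*(t2+s)/(1+lam*(t2+s)) * t1) < al*(lam*(t1+s)/(1+lam*(t1+s)) * t2)) by (apply Rmult_lt_compat_l; lra).
assert (U2 : x*(1-al)*(lam*t2/(1+lam*t2) * t1) <= x*(1-al)*(lam*t1/(1+lam*t1) * t2)) by (apply Rmult_le_compat_l; lra).
nra.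
Qed.

Lemma H_mono_s x al lam s1 s2 t : 0<=x -> 0<al<1 -> 0<lam -> 0<=s1 -> s1<s2 -> 0<=t ->
  H x al lam s1 t < H x al lam s2 t.
Proof.
intros Hx Hal Hl Hs Hs12 Ht. unfold H.
assert (lam*(t+s1)/(1+lam*(t+s1)) < lam*(t+s2)/(1+lam*(t+s2))).
{ assert (A: lam*(t+s1)/(1+lam*(t+s1))*1 < lam*(t+s2)/(1+lam*(t+s2))*1).
  { apply frac_lt; try nra. }
  lra. }
assert (al*(lam*(t+s1)/(1+lam*(t+s1))) < al*(lam*(t+s2)/(1+lam*(t+s2)))) by (apply Rmult_lt_compat_l; lra).
lra.
Qed.

Lemma fix_unique x al lam s t1 t2 : 0<=x -> 0<al<1 -> 0<lam -> 0<=s -> 0<t1 -> 0<t2 ->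
  H x al lam s t1 = t1 -> H x al lam s t2 = t2 -> t1 = t2.
Proof.
intros Hx Hal Hl Hs Ht1 Ht2 E1 E2. destruct (Rtotal_order t1 t2) as [Hlt|[Heq|Hgt]]; auto.
- pose proof (H_ratio x al lam s t1 t2 Hx Hal Hl Hs Ht1 Hlt) as R. rewrite E1, E2 in R. lra.
- pose proof (H_ratio x al lam s t2 t1 Hx Hal Hl Hs Ht2 Hgt) as R. rewrite E1, E2 in R. lra.
Qed.

Lemma fix_mono x al lam s1 s2 t1 t2 : 0<=x -> 0<al<1 -> 0<lam -> 0<s1 -> s1<s2 -> 0<t1 -> 0<t2 ->
  H x al lam s1 t1 = t1 -> H x al lam s2 t2 = t2 -> t1 < t2.
Proof.
intros Hx Hal Hl Hs1 Hs12 Ht1 Ht2 E1 E2. destruct (Rlt_le_dec t1 t2) as [|Hge]; auto. exfalso.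
pose proof (H_mono_s x al lam s1 s2 t1 Hx Hal Hl ltac:(lra) Hs12 ltac:(lra)) as M.
destruct (Rle_lt_or_eq_dec _ _ Hge) as [Hgt|Heq].
- pose proof (H_ratio x al lam s2 t2 t1 Hx Hal Hl ltac:(lra) Ht2 Hgt) as R. rewrite E2 in R.
  rewrite E1 in M. nra.
- subst. lra.
Qed.

Lemma H_cont x al lam s t : 0<=x -> 0<lam -> 0<=s -> 0<=t -> continuity_pt (H x al lam s) t.
Proof.
intros. apply derivable_continuous_pt, ex_derive_Reals_0. unfold Defs.H.
auto_derive. repeat split; nra.
Qed.

Lemma H_lt1 x al lam s t : 0<=x<1 -> 0<al<1 -> 0<lam -> 0<=s -> 0<=t -> H x al lam s t < 1.
Proof.
intros. unfold Defs.H.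
assert (lam*(t+s)/(1+lam*(t+s)) < 1).
{ apply Rmult_lt_reg_r with (1+lam*(t+s)). nra. unfold Rdiv. rewrite Rmult_assoc, Rinv_l; nra. }
assert (0 <= lam*t/(1+lam*t) < 1).
{ split. apply Rdiv_le_0_compat; nra.
  apply Rmult_lt_reg_r with (1+lam*t). nra. unfold Rdiv. rewrite Rmult_assoc, Rinv_l; nra. }
set (A := lam*(t+s)/(1+lam*(t+s))) in *. set (B := lam*t/(1+lam*t)) in *.
assert (al*A < al*1) by (apply Rmult_lt_compat_l; lra).
assert (x*(1-al)*B <= x*(1-al)*1) by (apply Rmult_le_compat_l; nra).
assert (x*(1-al) < 1 - al) by nra.
lra.
Qed.

Lemma fix_exists x al lam s : 0<=x<1 -> 0<al<1 -> 0<lam -> 0<=s ->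
  (0 < s \/ 1 < lam*(al + x*(1-al))) -> exists t, 0 < t /\ H x al lam s t = t.
Proof.
intros Hx Hal Hl Hs Hc.
assert (Hlo : exists t0, 0 < t0 < 1 /\ 0 < H x al lam s t0 - t0).
{ destruct Hc as [Hs0|Hc].
  -
    assert (HH0 : 0 < H x al lam s 0).
    { unfold H. replace (0+s) with s by ring.
      assert (0 < lam*s/(1+lam*s)) by (apply Rdiv_lt_0_compat; nra).
      assert (0 <= lam*0/(1+lam*0)) by (replace (lam*0) with 0 by ring; lra). nra. }
    assert (Hc0 := H_cont x al lam s 0 ltac:(lra) Hl Hs ltac:(lra)).
    unfold continuity_pt, continue_in, limit1_in, limit_in in Hc0.
    destruct (Hc0 (H x al lam s 0 / 2)) as [d [Hd Hd2]]; [lra|].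
    set (t0 := Rmin (Rmin (d/2) (1/2)) (H x al lam s 0 / 2)).
    assert (Ht0a : t0 <= d/2) by (eapply Rle_trans; [apply Rmin_l|apply Rmin_l]).
    assert (Ht0b : t0 <= 1/2) by (eapply Rle_trans; [apply Rmin_l|apply Rmin_r]).
    assert (Ht0c : t0 <= H x al lam s 0 / 2) by apply Rmin_r.
    assert (Ht0d : 0 < t0) by (unfold t0; repeat apply Rmin_pos; lra).
    exists t0. split; [lra|].
    specialize (Hd2 t0). simpl in Hd2. unfold R_dist, D_x, no_cond in Hd2.
    assert (Hd3 : Rabs (H x al lam s t0 - H x al lam s 0) < H x al lam s 0 / 2).
    { apply Hd2. split; [split; auto; lra|]. rewrite Rminus_0_r, Rabs_right; lra. }
    apply Rabs_def2 in Hd3. lra.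
  - set (c := lam*(al + x*(1-al))).
    set (t0 := Rmin (1/2) ((c - 1)/(2*lam))).
    assert (Ht0a : t0 <= 1/2) by apply Rmin_l.
    assert (Ht0b : t0 <= (c-1)/(2*lam)) by apply Rmin_r.
    assert (Ht0c : 0 < t0) by (apply Rmin_pos; [lra|apply Rdiv_lt_0_compat; unfold c in *; lra]).
    exists t0. split; [lra|].
    assert (Hlt : lam*t0 <= (c-1)/2).
    { apply Rmult_le_compat_l with (r:=lam) in Ht0b; [|lra].
      replace (lam*((c-1)/(2*lam))) with ((c-1)/2) in Ht0b by (field; intro; lra). lra. }
    assert (E1 : H x al lam s t0 >= al*(lam*t0/(1+lam*t0)) + x*(1-al)*(lam*t0/(1+lam*t0))).
    { unfold H. apply Rle_ge. apply Rplus_le_compat_r. apply Rmult_le_compat_l; [lra|].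
      rewrite <- (Rmult_1_r (lam*t0/(1+lam*t0))), <- (Rmult_1_r (lam*(t0+s)/(1+lam*(t0+s)))).
      apply frac_le; nra. }
    assert (E2 : al*(lam*t0/(1+lam*t0)) + x*(1-al)*(lam*t0/(1+lam*t0)) = c*t0/(1+lam*t0)).
    { unfold c. field. nra. }
    assert (E3 : c*t0/(1+lam*t0) > t0).
    { apply Rlt_gt. apply Rmult_lt_reg_r with (1+lam*t0). nra.
      unfold Rdiv. rewrite Rmult_assoc, Rinv_l by (intro; nra).
      assert (t0*(lam*t0) <= t0*((c-1)/2)) by (apply Rmult_le_compat_l; lra).
      unfold c in *. nra. }
    lra. }
destruct Hlo as [t0 [Ht0 Hpos]].
destruct (Ranalysis5.IVT_interv (fun t => t - H x al lam s t) t0 1) as [z [Hz1 Hz2]].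
- intros a Ha. apply continuity_pt_minus. apply continuity_pt_id. apply H_cont; lra.
- lra.
- lra.
- pose proof (H_lt1 x al lam s 1 Hx Hal Hl Hs ltac:(lra)). lra.
- exists z. split; lra.
Qed.
Lemma is_derive_lin_up (u v : R -> R) t du dv w c : is_derive u t du -> is_derive v t dv ->
  is_derive (fun s => w*(u s - v s * c)) t (w*(du - dv*c)).
Proof.
intros Hu Hv. apply is_derive_Reals in Hu. apply is_derive_Reals in Hv. apply is_derive_Reals.
apply derivable_pt_lim_scal with (f := fun s => u s - v s * c).
apply derivable_pt_lim_minus; auto.
replace (dv*c) with (dv*c + v t * 0) by ring.
apply (derivable_pt_lim_mult v (fun _ => c)); auto. apply derivable_pt_lim_const.
Qed.

Lemma is_derive_lin_lo (u v : R -> R) t du dv w c : is_derive u t du -> is_derive v t dv ->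
  is_derive (fun s => w*(v s * c - u s)) t (w*(dv*c - du)).
Proof.
intros Hu Hv. apply is_derive_Reals in Hu. apply is_derive_Reals in Hv. apply is_derive_Reals.
apply derivable_pt_lim_scal with (f := fun s => v s * c - u s).
apply derivable_pt_lim_minus; auto.
replace (dv*c) with (dv*c + v t * 0) by ring.
apply (derivable_pt_lim_mult v (fun _ => c)); auto. apply derivable_pt_lim_const.
Qed.

Definition mov (v0 v1 eps t0 t : R) := v1 + (v0 - v1) * exp (-(eps*(t - t0))).

Lemma mov_derive v0 v1 eps t0 t : is_derive (mov v0 v1 eps t0) t (-eps*(mov v0 v1 eps t0 t - v1)).
Proof. unfold mov. auto_derive; auto. unfold Rminus. ring. Qed.

Lemma mov_exp eps t0 t : 0 <= eps -> t0 <= t -> 0 < exp (-(eps*(t - t0))) <= 1.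
Proof.
intros. split. apply exp_pos. rewrite <- exp_0.
assert (0 <= eps*(t-t0)) by (apply Rmult_le_pos; lra).
destruct (Rle_lt_or_eq_dec _ _ H1) as [Hlt|Heq].
- left. apply exp_increasing. lra.
- rewrite <- Heq. right. f_equal. ring.
Qed.

Lemma mov_dec v0 v1 eps t0 t : 0 <= eps -> t0 <= t -> v1 <= v0 -> v1 <= mov v0 v1 eps t0 t <= v0.
Proof.
intros. pose proof (mov_exp eps t0 t H H0). unfold mov. nra.
Qed.

Lemma mov_inc v0 v1 eps t0 t : 0 <= eps -> t0 <= t -> v0 <= v1 -> v0 <= mov v0 v1 eps t0 t <= v1.
Proof.
intros. pose proof (mov_exp eps t0 t H H0). unfold mov. nra.
Qed.

Lemma mov_t0 v0 v1 eps t0 : mov v0 v1 eps t0 t0 = v0.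
Proof. unfold mov. replace (-(eps*(t0-t0))) with 0 by ring. rewrite exp_0. ring. Qed.

Lemma comp_up (u Mf : R -> R) w kk nu dl us Is I eta eps M1 t :
  0 < kk*nu -> 0 < dl -> 0 < us -> 0 < Is -> (1-us)*(kk*nu)*Is = us*dl ->
  (w = 0 \/ (0 < w /\ eps <= w * Rmin ((kk*nu)*Is) dl)) ->
  is_derive u t (w * ((1 - u t) * kk * nu * I - u t * dl)) ->
  is_derive Mf t (-eps*(Mf t - M1)) ->
  1 < M1 <= Mf t -> 0 <= I <= Mf t * Is + eta -> 0 <= eta < (M1-1)*us*Is ->
  w * (u t - Mf t * us) = 0 ->
  exists e, 0 < e /\ forall s, t < s < t + e -> w * (u s - Mf s * us) <= 0.
Proof.
intros HK Hdl Hus HIs Heq Hw Hu HM HM1 HI Heta Hz.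
destruct Hw as [Hw0|[Hw Heps]].
{ exists 1. split; [lra|]. intros. subst w. lra. }
assert (Hut : u t = Mf t * us).
{ apply Rmult_integral in Hz. destruct Hz; lra. }
eapply local_neg; [apply (is_derive_lin_up u Mf t _ _ w us Hu HM)| |auto].
pose proof (up_face (kk*nu) dl us Is w (Mf t) M1 I eta eps HK Hdl Hus HIs Hw Heq HM1 HI Heta Heps) as F.
rewrite Hut.
assert (E : w * ((1 - Mf t * us) * kk * nu * I - Mf t * us * dl) - - eps * (Mf t - M1) * us
  = w * ((kk*nu) * I * (1 - Mf t * us) - Mf t * us * dl) + eps * (Mf t - M1) * us) by ring.
rewrite E. apply Rmult_lt_reg_l with (/w). apply Rinv_0_lt_compat; auto.
rewrite Rmult_0_r, <- Rmult_assoc, Rinv_l by lra. lra.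
Qed.

Lemma comp_lo (u mf : R -> R) w kk nu dl us Is I eps m0 m1 t :
  0 < kk*nu -> 0 < dl -> 0 < us < 1 -> 0 < Is -> (1-us)*(kk*nu)*Is = us*dl ->
  (w = 0 \/ (0 < w /\ eps <= w * m0 * (kk*nu) * Is)) ->
  is_derive u t (w * ((1 - u t) * kk * nu * I - u t * dl)) ->
  is_derive mf t (-eps*(mf t - m1)) ->
  0 < m0 <= mf t -> mf t <= m1 < 1 -> mf t * Is <= I ->
  w * (mf t * us - u t) = 0 ->
  exists e, 0 < e /\ forall s, t < s < t + e -> w * (mf s * us - u s) <= 0.
Proof.
intros HK Hdl Hus HIs Heq Hw Hu HM Hm0 Hm1 HI Hz.
destruct Hw as [Hw0|[Hw Heps]].
{ exists 1. split; [lra|]. intros. subst w. lra. }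
assert (Hut : u t = mf t * us).
{ apply Rmult_integral in Hz. destruct Hz; lra. }
eapply local_neg; [apply (is_derive_lin_lo u mf t _ _ w us Hu HM)| |auto].
pose proof (low_face (kk*nu) dl us Is w (mf t) m0 m1 I eps HK Hdl Hus HIs Hw Heq Hm0 Hm1 HI Heps) as F.
rewrite Hut.
assert (E : w * (- eps * (mf t - m1) * us - w * ((1 - mf t * us) * kk * nu * I - mf t * us * dl))
  = - w * (w * ((kk*nu) * I * (1 - mf t * us) - mf t * us * dl) - eps * (m1 - mf t) * us)) by ring.
rewrite E.
assert (0 < w * (w * ((kk*nu) * I * (1 - mf t * us) - mf t * us * dl) - eps * (m1 - mf t) * us)).
{ apply Rmult_lt_0_compat; lra. }
lra.
Qed.

Lemma wcond K dl m0 rho w Is th0s : 0 < K -> 0 < dl -> 0 < m0 <= 1 -> 0 < rho -> 0 < th0s -> th0s <= Is ->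
  (w = 0 \/ rho <= w) ->
  (w = 0 \/ (0 < w /\ m0 * Rmin (K*th0s) dl * rho <= w * Rmin (K*Is) dl)) /\
  (w = 0 \/ (0 < w /\ m0 * Rmin (K*th0s) dl * rho <= w * m0 * K * Is)).
Proof.
intros HK Hdl Hm0 Hr Ht HI Hw.
destruct Hw as [Hw|Hw]; [split; left; auto|].
set (c0 := Rmin (K*th0s) dl).
assert (Hc1 : c0 <= K*th0s) by apply Rmin_l. assert (Hc2 : c0 <= dl) by apply Rmin_r.
assert (Hc0 : 0 < c0) by (apply Rmin_pos; nra).
assert (Hc3 : c0 <= Rmin (K*Is) dl) by (apply Rmin_glb; nra).
split; right; split; try lra.
- assert (m0*c0*rho <= c0*rho) by (apply Rmult_le_compat_r; nra).
  assert (c0*rho <= c0*w) by (apply Rmult_le_compat_l; lra).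
  assert (c0*w <= Rmin (K*Is) dl * w) by (apply Rmult_le_compat_r; lra).
  lra.
- assert (m0*c0*rho <= m0*(K*th0s)*rho) by (apply Rmult_le_compat_r; [lra|]; apply Rmult_le_compat_l; lra).
  assert (m0*(K*th0s)*rho <= m0*(K*th0s)*w) by (apply Rmult_le_compat_l; nra).
  assert (m0*(K*th0s)*w <= m0*(K*Is)*w).
  { apply Rmult_le_compat_r; [lra|]. apply Rmult_le_compat_l; nra. }
  nra.
Qed.

Lemma rho_exists x al : 0 <= x < 1 -> 0 < al < 1 -> exists rho, 0 < rho /\
  (x*al = 0 \/ rho <= x*al) /\ (x*(1-al) = 0 \/ rho <= x*(1-al)) /\ ((1-x)*al = 0 \/ rho <= (1-x)*al)
  /\ ((1-x)*(1-al) = 0 \/ rho <= (1-x)*(1-al)).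
Proof.
intros Hx Hal. destruct (Rle_lt_or_eq_dec 0 x (proj1 Hx)) as [Hx0|Hx0].
- exists (x*(1-x)*Rmin al (1-al)).
  assert (Hm1 : Rmin al (1-al) <= al) by apply Rmin_l.
  assert (Hm2 : Rmin al (1-al) <= 1-al) by apply Rmin_r.
  assert (Hm0 : 0 < Rmin al (1-al)) by (apply Rmin_pos; lra).
  assert (Hp : 0 < x*(1-x)) by nra.
  set (r := Rmin al (1-al)) in *.
  assert (Q1 : x*(1-x)*r <= x*r) by (assert (0 < x*r) by nra; nra).
  assert (Q2 : x*(1-x)*r <= (1-x)*r) by (assert (0 < (1-x)*r) by nra; nra).
  assert (Q3 : x*r <= x*al) by (apply Rmult_le_compat_l; lra).
  assert (Q4 : x*r <= x*(1-al)) by (apply Rmult_le_compat_l; lra).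
  assert (Q5 : (1-x)*r <= (1-x)*al) by (apply Rmult_le_compat_l; lra).
  assert (Q6 : (1-x)*r <= (1-x)*(1-al)) by (apply Rmult_le_compat_l; lra).
  split; [apply Rmult_lt_0_compat; lra|]. repeat split; right; lra.
- subst x. exists ((1-0)*Rmin al (1-al)).
  assert (Hm1 : Rmin al (1-al) <= al) by apply Rmin_l.
  assert (Hm2 : Rmin al (1-al) <= 1-al) by apply Rmin_r.
  assert (Hm0 : 0 < Rmin al (1-al)) by (apply Rmin_pos; lra).
  split; [nra|]. repeat split; try (left; ring); right; nra.
Qed.

Lemma stage2 x al kk nu dl (a b c d : R -> R) th0s th1s as_ bs t0 m0 m1 M0 M1 eta :
  0 <= x < 1 -> 0 < al < 1 -> 0 < kk*nu -> 0 < dl ->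
  is_solution x al kk nu dl a b c d ->
  0 < th0s -> 0 <= th1s -> 0 < as_ < 1 -> 0 < bs < 1 ->
  (1-as_)*(kk*nu)*(th0s+th1s) = as_*dl -> (1-bs)*(kk*nu)*th0s = bs*dl ->
  th0s = x*al*as_ + x*(1-al)*bs + (1-x)*al*as_ ->
  0 <= t0 -> 0 < m0 <= m1 -> m1 < 1 -> 1 < M1 <= M0 ->
  0 <= eta < (M1 - 1) * as_ * (th0s + th1s) ->
  (forall t, t0 <= t -> m1*th1s <= theta1 x al (d t) <= M1*th1s + eta) ->
  x*al*(m0*as_ - a t0) <= 0 -> x*al*(a t0 - M0*as_) <= 0 ->
  x*(1-al)*(m0*bs - b t0) <= 0 -> x*(1-al)*(b t0 - M0*bs) <= 0 ->
  (1-x)*al*(m0*as_ - c t0) <= 0 -> (1-x)*al*(c t0 - M0*as_) <= 0 ->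
  exists eps, 0 < eps /\ forall t, t0 <= t ->
    x*al*(mov m0 m1 eps t0 t*as_ - a t) <= 0 /\ x*al*(a t - mov M0 M1 eps t0 t*as_) <= 0 /\
    x*(1-al)*(mov m0 m1 eps t0 t*bs - b t) <= 0 /\ x*(1-al)*(b t - mov M0 M1 eps t0 t*bs) <= 0 /\
    (1-x)*al*(mov m0 m1 eps t0 t*as_ - c t) <= 0 /\ (1-x)*al*(c t - mov M0 M1 eps t0 t*as_) <= 0.
Proof.
intros Hx Hal HK Hdl Hsol Hth0 Hth1 Has Hbs Eqa Eqb Eth Ht0 Hm0 Hm1 HM1 Heta Hd1
  Ia1 Ia2 Ib1 Ib2 Ic1 Ic2.
destruct (rho_exists x al Hx Hal) as [rho [Hrho [Rwa [Rwb [Rwc _]]]]].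
set (eps := m0 * Rmin ((kk*nu)*th0s) dl * rho).
assert (Heps : 0 < eps).
{ unfold eps. apply Rmult_lt_0_compat; [|lra]. apply Rmult_lt_0_compat; [lra|]. apply Rmin_pos; nra. }
exists eps. split; auto.
set (mf := mov m0 m1 eps t0). set (Mf := mov M0 M1 eps t0).
assert (Hm0' : 0 < m0 <= 1) by lra.
assert (HS : th0s <= th0s + th1s) by lra.
destruct (wcond (kk*nu) dl m0 rho (x*al) (th0s+th1s) th0s HK Hdl Hm0' Hrho Hth0 HS Rwa) as [Wau Wal].
destruct (wcond (kk*nu) dl m0 rho (x*(1-al)) th0s th0s HK Hdl Hm0' Hrho Hth0 (Rle_refl _) Rwb) as [Wbu Wbl].
destruct (wcond (kk*nu) dl m0 rho ((1-x)*al) (th0s+th1s) th0s HK Hdl Hm0' Hrho Hth0 HS Rwc) as [Wcu Wcl].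
set (gal := fun t => x*al*(mf t*as_ - a t)).
set (gau := fun t => x*al*(a t - Mf t*as_)).
set (gbl := fun t => x*(1-al)*(mf t*bs - b t)).
set (gbu := fun t => x*(1-al)*(b t - Mf t*bs)).
set (gcl := fun t => (1-x)*al*(mf t*as_ - c t)).
set (gcu := fun t => (1-x)*al*(c t - Mf t*as_)).
assert (Hmf : forall t, t0 <= t -> m0 <= mf t <= m1) by (intros; apply mov_inc; lra).
assert (HMf : forall t, t0 <= t -> M1 <= Mf t <= M0) by (intros; apply mov_dec; lra).
assert (Hsol' : forall t, t0 <= t ->
   is_derive a t (x * al * ((1 - a t) * kk * nu * (theta0 x al (a t) (b t) (c t) + theta1 x al (d t)) - a t * dl)) /\
   is_derive b t (x * (1 - al) * ((1 - b t) * kk * nu * theta0 x al (a t) (b t) (c t) - b t * dl)) /\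
   is_derive c t ((1 - x) * al * ((1 - c t) * kk * nu * (theta0 x al (a t) (b t) (c t) + theta1 x al (d t)) - c t * dl))).
{ intros t Ht. destruct (Hsol t ltac:(lra)) as [A [B [C _]]]. auto. }
assert (Main : forall t, t0 <= t -> forall g, In g [gal; gau; gbl; gbu; gcl; gcu] -> g t <= 0).
{ apply barrier.
  - intros g Hg t Ht. destruct (Hsol' t Ht) as [A [B C]].
    pose proof (mov_derive m0 m1 eps t0 t) as DM. pose proof (mov_derive M0 M1 eps t0 t) as DMM.
    simpl in Hg. decompose [or] Hg; try contradiction; subst g; eexists.
    + exact (is_derive_lin_lo a mf t _ _ (x*al) as_ A DM).
    + exact (is_derive_lin_up a Mf t _ _ (x*al) as_ A DMM).
    + exact (is_derive_lin_lo b mf t _ _ (x*(1-al)) bs B DM).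
    + exact (is_derive_lin_up b Mf t _ _ (x*(1-al)) bs B DMM).
    + exact (is_derive_lin_lo c mf t _ _ ((1-x)*al) as_ C DM).
    + exact (is_derive_lin_up c Mf t _ _ ((1-x)*al) as_ C DMM).
  - intros g Hg. simpl in Hg.
    decompose [or] Hg; try contradiction; subst g; unfold gal, gau, gbl, gbu, gcl, gcu, mf, Mf;
    rewrite mov_t0; auto.
  - intros g Hg t Ht Hall Hz.
    assert (Ha1 := Hall gal ltac:(do 0 right; left; reflexivity)).
    assert (Ha2 := Hall gau ltac:(do 1 right; left; reflexivity)).
    assert (Hb1 := Hall gbl ltac:(do 2 right; left; reflexivity)).
    assert (Hb2 := Hall gbu ltac:(do 3 right; left; reflexivity)).
    assert (Hc1 := Hall gcl ltac:(do 4 right; left; reflexivity)).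
    assert (Hc2 := Hall gcu ltac:(do 5 right; left; reflexivity)).
    unfold gal, gau, gbl, gbu, gcl, gcu in Ha1, Ha2, Hb1, Hb2, Hc1, Hc2.
    set (th0 := theta0 x al (a t) (b t) (c t)) in *.
    set (th1 := theta1 x al (d t)) in *.
    assert (Eup : th0 - Mf t * th0s = x*al*(a t - Mf t*as_) + x*(1-al)*(b t - Mf t*bs) + (1-x)*al*(c t - Mf t*as_)).
    { unfold th0, theta0. rewrite Eth. ring. }
    assert (Elo : mf t * th0s - th0 = x*al*(mf t*as_ - a t) + x*(1-al)*(mf t*bs - b t) + (1-x)*al*(mf t*as_ - c t)).
    { unfold th0, theta0. rewrite Eth. ring. }
    destruct (Hmf t Ht) as [Hmf1 Hmf2]. destruct (HMf t Ht) as [HMf1 HMf2].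
    destruct (Hd1 t Ht) as [Hth1a Hth1b]. fold th1 in Hth1a, Hth1b.
    assert (T0u : th0 <= Mf t * th0s) by lra.
    assert (T0l : mf t * th0s <= th0) by lra.
    assert (T1u : th1 <= Mf t * th1s + eta).
    { assert (M1 * th1s <= Mf t * th1s) by (apply Rmult_le_compat_r; lra). lra. }
    assert (T1l : mf t * th1s <= th1).
    { assert (mf t * th1s <= m1 * th1s) by (apply Rmult_le_compat_r; lra). lra. }
    assert (Pos0 : 0 <= mf t * th0s) by (apply Rmult_le_pos; lra).
    assert (Pos1 : 0 <= mf t * th1s) by (apply Rmult_le_pos; lra).
    destruct (Hsol' t Ht) as [A [B C]]. fold th0 th1 in A, B, C.
    pose proof (mov_derive m0 m1 eps t0 t) as DM. pose proof (mov_derive M0 M1 eps t0 t) as DMM.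
    fold mf in DM. fold Mf in DMM.
    assert (Has' : 0 < as_) by lra. assert (Hbs' : 0 < bs) by lra.
    assert (HS0 : 0 < th0s + th1s) by lra.
    assert (IS1 : mf t * (th0s + th1s) <= th0 + th1) by (rewrite Rmult_plus_distr_l; lra).
    assert (IS2 : 0 <= th0 + th1 <= Mf t * (th0s + th1s) + eta) by (rewrite Rmult_plus_distr_l; lra).
    assert (IS3 : 0 <= th0 <= Mf t * th0s + 0) by lra.
    assert (Hbeta : 0 <= 0 < (M1 - 1) * bs * th0s).
    { split; [lra|]. apply Rmult_lt_0_compat; [|lra]. apply Rmult_lt_0_compat; lra. }
    simpl in Hg. decompose [or] Hg; try contradiction; subst g.
    + exact (comp_lo a mf (x*al) kk nu dl as_ (th0s+th1s) (th0+th1) eps m0 m1 t HK Hdl Has HS0 Eqa Wal A DM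
        (conj (proj1 Hm0) Hmf1) (conj Hmf2 Hm1) IS1 Hz).
    + exact (comp_up a Mf (x*al) kk nu dl as_ (th0s+th1s) (th0+th1) eta eps M1 t HK Hdl Has' HS0 Eqa Wau A DMM
        (conj (proj1 HM1) HMf1) IS2 Heta Hz).
    + exact (comp_lo b mf (x*(1-al)) kk nu dl bs th0s th0 eps m0 m1 t HK Hdl Hbs Hth0 Eqb Wbl B DM
        (conj (proj1 Hm0) Hmf1) (conj Hmf2 Hm1) T0l Hz).
    + exact (comp_up b Mf (x*(1-al)) kk nu dl bs th0s th0 0 eps M1 t HK Hdl Hbs' Hth0 Eqb Wbu B DMM
        (conj (proj1 HM1) HMf1) IS3 Hbeta Hz).
    + exact (comp_lo c mf ((1-x)*al) kk nu dl as_ (th0s+th1s) (th0+th1) eps m0 m1 t HK Hdl Has HS0 Eqa Wcl C DM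
        (conj (proj1 Hm0) Hmf1) (conj Hmf2 Hm1) IS1 Hz).
    + exact (comp_up c Mf ((1-x)*al) kk nu dl as_ (th0s+th1s) (th0+th1) eta eps M1 t HK Hdl Has' HS0 Eqa Wcu C DMM
        (conj (proj1 HM1) HMf1) IS2 Heta Hz). }
intros t Ht.
repeat split; [apply (Main t Ht gal ltac:(do 0 right; left; reflexivity))|apply (Main t Ht gau ltac:(do 1 right; left; reflexivity))|apply (Main t Ht gbl ltac:(do 2 right; left; reflexivity))|apply (Main t Ht gbu ltac:(do 3 right; left; reflexivity))|apply (Main t Ht gcl ltac:(do 4 right; left; reflexivity))|apply (Main t Ht gcu ltac:(do 5 right; left; reflexivity))].
Qed.


Lemma stage1e x al kk nu dl (a b c d : R -> R) ds m0 m1 M0 M1 :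
  0 <= x < 1 -> 0 < al < 1 -> 0 < kk*nu -> 0 < dl -> is_solution x al kk nu dl a b c d ->
  0 < ds < 1 -> (1-ds)*(kk*nu)*((1-x)*(1-al)*ds) = ds*dl ->
  0 < m0 <= m1 -> m1 < 1 -> 1 < M1 <= M0 -> m0*ds <= d 0 <= M0*ds ->
  exists eps, 0 < eps /\ forall t, 0 <= t -> mov m0 m1 eps 0 t * ds <= d t <= mov M0 M1 eps 0 t * ds.
Proof.
intros Hx Hal HK Hdl Hsol Hds Eqd Hm0 Hm1 HM1 Hd0.
set (w := (1-x)*(1-al)).
assert (Hw : 0 < w) by (unfold w; apply Rmult_lt_0_compat; lra).
set (Is := w*ds).
assert (HIs : 0 < Is) by (unfold Is; apply Rmult_lt_0_compat; lra).
set (eps := w*m0*Rmin ((kk*nu)*Is) dl).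
assert (Hc0 : 0 < Rmin ((kk*nu)*Is) dl) by (apply Rmin_pos; nra).
assert (Hc1 : Rmin ((kk*nu)*Is) dl <= (kk*nu)*Is) by apply Rmin_l.
assert (Heps : 0 < eps) by (unfold eps; repeat apply Rmult_lt_0_compat; lra).
exists eps. split; auto.
assert (Wu : w = 0 \/ (0 < w /\ eps <= w * Rmin ((kk*nu)*Is) dl)).
{ right. split; auto. unfold eps.
  assert (m0 * Rmin ((kk*nu)*Is) dl <= 1 * Rmin ((kk*nu)*Is) dl) by (apply Rmult_le_compat_r; lra).
  assert (w*(m0 * Rmin ((kk*nu)*Is) dl) <= w*(1 * Rmin ((kk*nu)*Is) dl)) by (apply Rmult_le_compat_l; lra).
  lra. }
assert (Wl : w = 0 \/ (0 < w /\ eps <= w * m0 * (kk*nu) * Is)).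
{ right. split; auto. unfold eps.
  assert (w*m0*Rmin ((kk*nu)*Is) dl <= w*m0*((kk*nu)*Is)).
  { apply Rmult_le_compat_l; [|lra]. apply Rmult_le_pos; lra. }
  lra. }
set (mf := mov m0 m1 eps 0). set (Mf := mov M0 M1 eps 0).
set (g1 := fun t => w*(mf t*ds - d t)).
set (g2 := fun t => w*(d t - Mf t*ds)).
assert (Hmf : forall t, 0 <= t -> m0 <= mf t <= m1) by (intros; apply mov_inc; lra).
assert (HMf : forall t, 0 <= t -> M1 <= Mf t <= M0) by (intros; apply mov_dec; lra).
assert (Hsol' : forall t, 0 <= t ->
   is_derive d t (w * ((1 - d t) * kk * nu * theta1 x al (d t) - d t * dl))).
{ intros t Ht. destruct (Hsol t Ht) as [_ [_ [_ D]]]. exact D. }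
assert (Main : forall t, 0 <= t -> forall g, In g [g1; g2] -> g t <= 0).
{ apply barrier.
  - intros g Hg t Ht. pose proof (Hsol' t Ht) as D.
    pose proof (mov_derive m0 m1 eps 0 t) as DM. pose proof (mov_derive M0 M1 eps 0 t) as DMM.
    simpl in Hg. decompose [or] Hg; try contradiction; subst g; eexists.
    + exact (is_derive_lin_lo d mf t _ _ w ds D DM).
    + exact (is_derive_lin_up d Mf t _ _ w ds D DMM).
  - intros g Hg. simpl in Hg.
    decompose [or] Hg; try contradiction; subst g; unfold g1, g2, mf, Mf;
    rewrite mov_t0; (apply (Rle_trans _ (w*0)); [apply Rmult_le_compat_l; lra|lra]).
  - intros g Hg t Ht Hall Hz.
    assert (H1 := Hall g1 ltac:(left; reflexivity)).
    assert (H2 := Hall g2 ltac:(right; left; reflexivity)).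
    unfold g1, g2 in H1, H2.
    destruct (Hmf t Ht) as [Hmf1 Hmf2]. destruct (HMf t Ht) as [HMf1 HMf2].
    pose proof (Hsol' t Ht) as D.
    pose proof (mov_derive m0 m1 eps 0 t) as DM. pose proof (mov_derive M0 M1 eps 0 t) as DMM.
    fold mf in DM. fold Mf in DMM.
    assert (Ith : theta1 x al (d t) = w * d t) by (unfold theta1, w; ring).
    assert (IL : mf t * Is <= theta1 x al (d t)).
    { rewrite Ith. unfold Is. assert (E : w*d t - mf t*(w*ds) = - (w*(mf t*ds - d t))) by ring. lra. }
    assert (IU : 0 <= theta1 x al (d t) <= Mf t * Is + 0).
    { split.
      - assert (0 <= mf t * Is) by (apply Rmult_le_pos; lra). lra.
      - rewrite Ith. unfold Is. assert (E : w*d t - Mf t*(w*ds) = w*(d t - Mf t*ds)) by ring. lra. }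
    assert (Heta : 0 <= 0 < (M1-1)*ds*Is).
    { split; [lra|]. apply Rmult_lt_0_compat; [|lra]. apply Rmult_lt_0_compat; lra. }
    assert (Hds' : 0 < ds) by lra.
    simpl in Hg. decompose [or] Hg; try contradiction; subst g.
    + exact (comp_lo d mf w kk nu dl ds Is (theta1 x al (d t)) eps m0 m1 t HK Hdl Hds HIs Eqd Wl D DM
        (conj (proj1 Hm0) Hmf1) (conj Hmf2 Hm1) IL Hz).
    + exact (comp_up d Mf w kk nu dl ds Is (theta1 x al (d t)) 0 eps M1 t HK Hdl Hds' HIs Eqd Wu D DMM
        (conj (proj1 HM1) HMf1) IU Heta Hz). }
intros t Ht.
assert (H1 := Main t Ht g1 ltac:(left; reflexivity)).
assert (H2 := Main t Ht g2 ltac:(right; left; reflexivity)).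
unfold g1, g2 in H1, H2. fold mf Mf.
split.
- apply Rmult_le_reg_l with w; auto. lra.
- apply Rmult_le_reg_l with w; auto. lra.
Qed.
Lemma derive_D gam t : 0 <= gam -> 0 <= t -> is_derive (fun s => / (1 + gam*s)) t (-gam * (/(1+gam*t))^2).
Proof.
intros. auto_derive. nra. field. nra.
Qed.

Lemma derive_L d0 C t : is_derive (fun s => d0 * exp (-(C*s))) t (-C * (d0 * exp (-(C*t)))).
Proof. auto_derive; auto. ring. Qed.

Lemma stage1n x al kk nu dl (a b c d : R -> R) :
  0 <= x < 1 -> 0 < al < 1 -> 0 < kk*nu -> 0 < dl -> is_solution x al kk nu dl a b c d ->
  (kk*nu)*((1-x)*(1-al)) <= dl -> 0 < d 0 <= 1 ->
  forall t, 0 <= t -> 0 <= d t <= / (1 + (kk*nu)*((1-x)*(1-al))^2/2 * t).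
Proof.
intros Hx Hal HK Hdl Hsol Hend Hd0.
set (w := (1-x)*(1-al)) in *.
assert (Hw : 0 < w) by (unfold w; apply Rmult_lt_0_compat; lra).
set (K := kk*nu) in *.
set (gam := K*w^2/2).
assert (Hgam : 0 < gam) by (unfold gam; apply Rmult_lt_0_compat; [apply Rmult_lt_0_compat|]; nra).
set (C := w*dl + 1).
set (D := fun s => / (1 + gam*s)).
set (L := fun s => d 0 * exp (-(C*s))).
set (g1 := fun s => 1*(d s - D s * 1)).
set (g2 := fun s => 1*(L s * 1 - d s)).
assert (Hsol' : forall t, 0 <= t ->
   is_derive d t (w * ((1 - d t) * kk * nu * theta1 x al (d t) - d t * dl))).
{ intros t Ht. destruct (Hsol t Ht) as [_ [_ [_ Dd]]]. exact Dd. }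
assert (HDpos : forall t, 0 <= t -> 0 < D t <= 1).
{ intros t Ht. unfold D. split. apply Rinv_0_lt_compat; nra.
  rewrite <- Rinv_1. apply Rinv_le_contravar; nra. }
assert (HLpos : forall t, 0 < L t) by (intros; unfold L; apply Rmult_lt_0_compat; [lra|apply exp_pos]).
assert (Main : forall t, 0 <= t -> forall g, In g [g1; g2] -> g t <= 0).
{ apply barrier.
  - intros g Hg t Ht. pose proof (Hsol' t Ht) as Dd.
    pose proof (derive_D gam t ltac:(lra) Ht) as DD. pose proof (derive_L (d 0) C t) as DL.
    simpl in Hg. decompose [or] Hg; try contradiction; subst g; eexists.
    + exact (is_derive_lin_up d D t _ _ 1 1 Dd DD).
    + exact (is_derive_lin_lo d L t _ _ 1 1 Dd DL).
  - intros g Hg. simpl in Hg.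
    decompose [or] Hg; try contradiction; subst g; unfold g1, g2, D, L.
    + rewrite Rmult_0_r, Rplus_0_r, Rinv_1. lra.
    + rewrite Rmult_0_r, Ropp_0, exp_0. lra.
  - intros g Hg t Ht Hall Hz.
    assert (H1 := Hall g1 ltac:(left; reflexivity)).
    assert (H2 := Hall g2 ltac:(right; left; reflexivity)).
    unfold g1, g2 in H1, H2.
    pose proof (Hsol' t Ht) as Dd.
    pose proof (derive_D gam t ltac:(lra) Ht) as DD. pose proof (derive_L (d 0) C t) as DL.
    destruct (HDpos t Ht) as [HD1 HD2]. pose proof (HLpos t) as HL.
    assert (Ith : theta1 x al (d t) = w * d t) by (unfold theta1, w; ring).
    rewrite Ith in Dd.
    assert (HDi : / (1 + gam * t) = D t) by reflexivity.
    rewrite HDi in DD.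
    assert (HLi : d 0 * exp (-(C*t)) = L t) by reflexivity.
    rewrite HLi in DL.
    simpl in Hg. decompose [or] Hg; try contradiction; subst g.
    + eapply local_neg; [exact (is_derive_lin_up d D t _ _ 1 1 Dd DD)| |exact Hz].
      unfold g1 in Hz. assert (Hdt : d t = D t) by lra.
      assert (Hdp : 0 < d t) by lra.
      assert (Q1 : w * d t * (K*w - dl) <= 0).
      { assert (0 <= w * d t) by nra. assert (K*w - dl <= 0) by lra. nra. }
      assert (E : w * ((1 - d t) * kk * nu * (w * d t) - d t * dl) - - gam * D t ^ 2 * 1
                 = w * d t * (K*w - dl) - gam * (d t)^2) by (rewrite Hdt; unfold gam, K; field).
      replace (1 * (w * ((1 - d t) * kk * nu * (w * d t) - d t * dl) - - gam * D t ^ 2 * 1))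
        with (w * d t * (K*w - dl) - gam * (d t)^2) by (rewrite <- E; ring).
      assert (0 < gam * (d t)^2) by (apply Rmult_lt_0_compat; nra). lra.
    + eapply local_neg; [exact (is_derive_lin_lo d L t _ _ 1 1 Dd DL)| |exact Hz].
      unfold g2 in Hz. assert (Hdt : d t = L t) by lra.
      assert (Hd1 : d t <= 1) by lra.
      assert (Q1 : 0 <= (1 - d t) * K * (w * d t)).
      { apply Rmult_le_pos; [|nra]. apply Rmult_le_pos; lra. }
      assert (E : 1 * (- C * L t * 1 - w * ((1 - d t) * kk * nu * (w * d t) - d t * dl))
                 = - d t - w * ((1 - d t) * K * (w * d t))) by (unfold C, K; rewrite Hdt; ring).
      rewrite E. assert (0 <= w * ((1 - d t) * K * (w * d t))) by (apply Rmult_le_pos; lra).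
      lra. }
intros t Ht.
assert (H1 := Main t Ht g1 ltac:(left; reflexivity)).
assert (H2 := Main t Ht g2 ltac:(right; left; reflexivity)).
unfold g1, g2 in H1, H2. pose proof (HLpos t). unfold D in H1.
split; lra.
Qed.


Lemma exp_small A eps tau t0 : 0 <= A -> 0 < eps -> 0 < tau ->
  exists T, t0 <= T /\ forall t, T <= t -> A * exp (-(eps*(t-t0))) <= tau.
Proof.
intros HA He Ht. exists (t0 + A/(eps*tau)). split.
{ assert (0 <= A/(eps*tau)) by (apply Rdiv_le_0_compat; nra). lra. }
intros t Htt. set (y := eps*(t-t0)).
assert (Hy : A/tau <= y).
{ unfold y. assert (A/(eps*tau) <= t - t0) by lra.
  apply Rmult_le_compat_l with (r := eps) in H; [|lra].
  replace (eps*(A/(eps*tau))) with (A/tau) in H by (field; split; intro; lra). lra. }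
assert (Hey : y <= exp y).
{ destruct (Req_dec y 0) as [->|Hn]. rewrite exp_0; lra. pose proof (exp_ineq1 y Hn). lra. }
rewrite exp_Ropp.
assert (Hexp : 0 < exp y) by apply exp_pos.
apply Rmult_le_reg_r with (exp y); auto.
rewrite Rmult_assoc, Rinv_l by lra. rewrite Rmult_1_r.
assert (A/tau*tau = A) by (field; lra).
assert (A/tau*tau <= exp y * tau) by (apply Rmult_le_compat_r; lra).
lra.
Qed.

Lemma box_conv (f : R -> R) L m0 M0 :
  0 < L -> 0 < m0 < 1 -> 1 < M0 ->
  (forall m1 M1, m0 <= m1 < 1 -> 1 < M1 <= M0 -> exists T0 eps, 0 < eps /\ forall t, T0 <= t ->
     mov m0 m1 eps T0 t * L <= f t <= mov M0 M1 eps T0 t * L) ->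
  forall eta, 0 < eta -> exists T, 0 <= T /\ forall t, T <= t -> L - eta <= f t <= L + eta.
Proof.
intros HL Hm0 HM0 Hbox eta Heta.
set (tau := eta / (2*L)).
assert (Htau : 0 < tau) by (unfold tau; apply Rdiv_lt_0_compat; lra).
assert (HtL : tau * L = eta/2) by (unfold tau; field; lra).
set (m1 := Rmax m0 (1 - tau)). set (M1 := Rmin M0 (1 + tau)).
assert (Hm1a : m0 <= m1) by apply Rmax_l. assert (Hm1b : 1 - tau <= m1) by apply Rmax_r.
assert (Hm1c : m1 < 1) by (apply Rmax_lub_lt; lra).
assert (HM1a : M1 <= M0) by apply Rmin_l. assert (HM1b : M1 <= 1 + tau) by apply Rmin_r.
assert (HM1c : 1 < M1) by (apply Rmin_glb_lt; lra).
destruct (Hbox m1 M1 (conj Hm1a Hm1c) (conj HM1c HM1a)) as [T0 [eps [Heps Hb]]].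
destruct (exp_small ((m1 - m0) + (M0 - M1)) eps tau T0 ltac:(lra) Heps Htau) as [T1 [HT1 HT1']].
exists (Rmax T1 0). split; [apply Rmax_r|].
intros t Ht. assert (T1 <= t) by (eapply Rle_trans; [apply Rmax_l|exact Ht]).
specialize (HT1' t H). specialize (Hb t ltac:(lra)). unfold mov in Hb.
set (e := exp (-(eps*(t-T0)))) in *.
assert (He : 0 < e) by apply exp_pos.
assert (Q1 : (m1 - m0) * e <= tau) by nra.
assert (Q2 : (M0 - M1) * e <= tau) by nra.
assert (Q3 : (m1 - tau) * L <= (m1 + (m0 - m1) * e) * L) by (apply Rmult_le_compat_r; lra).
assert (Q4 : (M1 + (M0 - M1) * e) * L <= (M1 + tau) * L) by (apply Rmult_le_compat_r; lra).
assert (Q5 : (1 - tau - tau) * L <= (m1 - tau) * L) by (apply Rmult_le_compat_r; lra).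
assert (Q6 : (M1 + tau) * L <= (1 + tau + tau) * L) by (apply Rmult_le_compat_r; lra).
assert (E1 : (1 - tau - tau) * L = L - eta) by lra.
assert (E2 : (1 + tau + tau) * L = L + eta) by lra.
lra.
Qed.

Lemma lim_of_close (f : R -> R) L :
  (forall eta, 0 < eta -> exists T, 0 <= T /\ forall t, T <= t -> L - eta <= f t <= L + eta) ->
  is_lim f p_infty L.
Proof.
intros Hc. apply is_lim_spec. intros eps. simpl.
destruct (Hc (eps/2)) as [T [_ HT]]. { pose proof (cond_pos eps). lra. }
exists T. intros t Ht. pose proof (cond_pos eps). specialize (HT t ltac:(lra)).
apply Rabs_def1; lra.
Qed.

Lemma mov_const v eps t0 t : mov v v eps t0 t = v.
Proof. unfold mov. ring. Qed.


Lemma wle w u v : 0 <= w -> u <= v -> w*(u - v) <= 0.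
Proof. intros. assert (u - v <= 0) by lra. nra. Qed.

Lemma theta0_bounds x al a b c as_ bs th0s mf Mf :
  th0s = x*al*as_ + x*(1-al)*bs + (1-x)*al*as_ ->
  x*al*(mf*as_ - a) <= 0 -> x*al*(a - Mf*as_) <= 0 ->
  x*(1-al)*(mf*bs - b) <= 0 -> x*(1-al)*(b - Mf*bs) <= 0 ->
  (1-x)*al*(mf*as_ - c) <= 0 -> (1-x)*al*(c - Mf*as_) <= 0 ->
  mf * th0s <= theta0 x al a b c <= Mf * th0s.
Proof.
intros Eth H1 H2 H3 H4 H5 H6. unfold theta0. rewrite Eth.
assert (E1 : mf * (x*al*as_ + x*(1-al)*bs + (1-x)*al*as_) - (x * (al * a + (1 - al) * b) + (1 - x) * al * c)
  = x*al*(mf*as_ - a) + x*(1-al)*(mf*bs - b) + (1-x)*al*(mf*as_ - c)) by ring.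
assert (E2 : (x * (al * a + (1 - al) * b) + (1 - x) * al * c) - Mf * (x*al*as_ + x*(1-al)*bs + (1-x)*al*as_)
  = x*al*(a - Mf*as_) + x*(1-al)*(b - Mf*bs) + (1-x)*al*(c - Mf*as_)) by ring.
lra.
Qed.

Lemma stage1 x al kk nu dl (a b c d : R -> R) :
  0 <= x < 1 -> 0 < al < 1 -> 0 < kk*nu -> 0 < dl -> is_solution x al kk nu dl a b c d ->
  0 < d 0 <= 1 ->
  let s := theta1_ss x al (kk*nu/dl) in
  exists m0d Bd, 0 < m0d < 1 /\ 0 <= Bd /\
    (forall t, 0 <= t -> m0d * s <= theta1 x al (d t) <= Bd) /\
    (forall eta, 0 < eta -> exists T, 0 <= T /\ forall t, T <= t -> s - eta <= theta1 x al (d t) <= s + eta).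
Proof.
intros Hx Hal HK Hdl Hsol Hd0 s.
set (w := (1-x)*(1-al)).
assert (Hw : 0 < w) by (unfold w; apply Rmult_lt_0_compat; lra).
assert (Ith : forall t, theta1 x al (d t) = w * d t) by (intros; unfold theta1, w; ring).
assert (Hlam : 0 < kk*nu/dl) by (apply Rdiv_lt_0_compat; lra).
assert (Hil : / (kk*nu/dl) = dl/(kk*nu)) by (field; repeat split; intro; nra).
unfold s, theta1_ss. rewrite Hil.
replace ((1-al)*(1-x)) with w by (unfold w; ring).
destruct (Rlt_le_dec 0 (w - dl/(kk*nu))) as [Hend|Hnend].
- rewrite Rmax_left by lra. set (s' := w - dl/(kk*nu)).
  set (ds := s'/w).
  assert (Hds : 0 < ds < 1).
  { unfold ds, s'. split. apply Rdiv_lt_0_compat; lra.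
    apply Rmult_lt_reg_r with w; auto. unfold Rdiv. rewrite Rmult_assoc, Rinv_l by lra.
    assert (0 < dl/(kk*nu)) by (apply Rdiv_lt_0_compat; lra). lra. }
  assert (Eqd : (1-ds)*(kk*nu)*((1-x)*(1-al)*ds) = ds*dl).
  { fold w. unfold ds, s'. field. repeat split; intro; nra. }
  assert (Hs'w : w * ds = s') by (unfold ds; field; lra).
  set (m0d := Rmin (1/2) (d 0/ds)).
  assert (Hm0d1 : m0d <= 1/2) by apply Rmin_l.
  assert (Hm0d2 : m0d <= d 0/ds) by apply Rmin_r.
  assert (Hm0d3 : 0 < m0d) by (apply Rmin_pos; [lra|apply Rdiv_lt_0_compat; lra]).
  set (M0d := 2 + /ds).
  assert (HM0d : 1 < M0d) by (unfold M0d; pose proof (Rinv_0_lt_compat ds (proj1 Hds)); lra).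
  assert (Hin : m0d * ds <= d 0 <= M0d * ds).
  { split.
    - apply Rmult_le_compat_r with (r := ds) in Hm0d2; [|lra].
      replace (d 0 / ds * ds) with (d 0) in Hm0d2 by (field; repeat split; intro; nra). lra.
    - unfold M0d. rewrite Rmult_plus_distr_r, Rinv_l by lra. lra. }
  assert (Hbox : forall m1 M1, m0d <= m1 < 1 -> 1 < M1 <= M0d -> exists eps, 0 < eps /\
            forall t, 0 <= t -> mov m0d m1 eps 0 t * s' <= theta1 x al (d t) <= mov M0d M1 eps 0 t * s').
  { intros m1 M1 Hm1 HM1.
    destruct (stage1e x al kk nu dl a b c d ds m0d m1 M0d M1 Hx Hal HK Hdl Hsol Hds Eqd
      ltac:(lra) ltac:(lra) ltac:(lra) Hin) as [eps [Heps Hb]].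
    exists eps. split; auto. intros t Ht. specialize (Hb t Ht). rewrite Ith, <- Hs'w.
    destruct Hb as [Hb1 Hb2]. split.
    - replace (mov m0d m1 eps 0 t * (w * ds)) with (w * (mov m0d m1 eps 0 t * ds)) by ring.
      apply Rmult_le_compat_l; lra.
    - replace (mov M0d M1 eps 0 t * (w * ds)) with (w * (mov M0d M1 eps 0 t * ds)) by ring.
      apply Rmult_le_compat_l; lra. }
  exists m0d, (M0d * s'). assert (0 < s') by (unfold s'; lra).
  split; [lra|]. split; [nra|]. split.
  + intros t Ht. destruct (Hbox m0d M0d ltac:(lra) ltac:(lra)) as [eps [_ Hb]].
    specialize (Hb t Ht). rewrite !mov_const in Hb. exact Hb.
  + apply (box_conv (fun t => theta1 x al (d t)) s' m0d M0d); auto; try lra.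
    intros m1 M1 Hm1 HM1. destruct (Hbox m1 M1 Hm1 HM1) as [eps [Heps Hb]].
    exists 0, eps. split; auto.
- rewrite Rmax_right by lra.
  assert (Hnend' : (kk*nu)*((1-x)*(1-al)) <= dl).
  { fold w. assert (Hn2 : w <= dl/(kk*nu)) by lra.
    apply Rmult_le_compat_l with (r := kk*nu) in Hn2; [|lra].
    replace (kk*nu*(dl/(kk*nu))) with dl in Hn2 by (field; repeat split; intro; nra). lra. }
  pose proof (stage1n x al kk nu dl a b c d Hx Hal HK Hdl Hsol Hnend' Hd0) as Hb.
  fold w in Hb. set (gam := kk*nu*w^2/2) in Hb.
  assert (Hgam : 0 < gam) by (unfold gam; apply Rmult_lt_0_compat; [apply Rmult_lt_0_compat|]; nra).
  exists (1/2), w. split; [lra|]. split; [lra|]. split.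
  + intros t Ht. destruct (Hb t Ht) as [H1 H2]. rewrite Ith.
    assert (/ (1 + gam*t) <= 1) by (rewrite <- Rinv_1; apply Rinv_le_contravar; nra).
    split; nra.
  + intros eta Heta. exists (w/(gam*eta)). split.
    { apply Rdiv_le_0_compat; nra. }
    intros t Ht. assert (Ht0 : 0 <= t) by (assert (0 <= w/(gam*eta)) by (apply Rdiv_le_0_compat; nra); lra).
    destruct (Hb t Ht0) as [H1 H2]. rewrite Ith.
    assert (Hwt : w <= eta*(1+gam*t)).
    { apply Rmult_le_compat_l with (r := gam*eta) in Ht; [|nra].
      replace (gam*eta*(w/(gam*eta))) with w in Ht by (field; repeat split; intro; nra). nra. }
    assert (w * / (1 + gam*t) <= eta).
    { apply Rmult_le_reg_r with (1+gam*t). nra.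
      rewrite Rmult_assoc, Rinv_l by nra. lra. }
    assert (w * d t <= w * / (1 + gam*t)) by (apply Rmult_le_compat_l; lra).
    split; nra.
Qed.


Theorem proposition1 (x alpha : R) (k : nat) (nu delta : R) :
  0 <= x < 1 -> (0 < k)%nat -> 0 < nu -> 0 < delta -> 0 < alpha < 1 ->
  let lam := INR k * nu / delta in
  (alpha > / (1 - x) * (/ lam - x) \/ alpha < 1 - / (lam * (1 - x))) ->
  (exists th0 : R,
     0 < th0 /\
     H x alpha lam (theta1_ss x alpha lam) th0 = th0 /\
     (forall t, 0 < t -> H x alpha lam (theta1_ss x alpha lam) t = t -> t = th0) /\
     (forall a b c d : R -> R,
        is_solution x alpha (INR k) nu delta a b c d ->
        0 < a 0 <= 1 -> 0 < b 0 <= 1 -> 0 < c 0 <= 1 -> 0 < d 0 <= 1 ->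
        is_lim (fun t => theta0 x alpha (a t) (b t) (c t)) p_infty th0)) /\
  (0 < theta1_ss x alpha lam ->
     forall s1 s2 t1 t2 : R, 0 < s1 < s2 -> 0 < t1 -> 0 < t2 ->
       H x alpha lam s1 t1 = t1 -> H x alpha lam s2 t2 = t2 -> t1 < t2).
Proof.
intros Hx Hk Hnu Hdl Hal lam Hcond.
assert (Hkk : 0 < INR k) by (apply lt_0_INR; lia).
assert (HK : 0 < INR k * nu) by (apply Rmult_lt_0_compat; lra).
assert (Hlam : 0 < lam) by (unfold lam; apply Rdiv_lt_0_compat; lra).
set (s := theta1_ss x alpha lam).
assert (Hs : 0 <= s) by (unfold s, theta1_ss; apply Rmax_r).
split.
2:{ intros _ s1 s2 t1 t2 Hs12 Ht1 Ht2 E1 E2.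
    exact (fix_mono x alpha lam s1 s2 t1 t2 (proj1 Hx) Hal Hlam (proj1 Hs12) (proj2 Hs12) Ht1 Ht2 E1 E2). }
assert (Hc : 0 < s \/ 1 < lam * (alpha + x*(1-alpha))).
{ destruct Hcond as [C1|C2].
  - right. assert (Hx1 : 0 < 1 - x) by lra.
    apply Rmult_lt_compat_l with (r := 1 - x) in C1; auto.
    replace ((1-x) * (/ (1 - x) * (/ lam - x))) with (/lam - x) in C1 by (field; lra).
    apply Rmult_lt_compat_l with (r := lam) in C1; auto.
    replace (lam * (/lam - x)) with (1 - lam*x) in C1 by (field; lra). nra.
  - left. assert (Hx1 : 0 < 1 - x) by lra.
    assert (Hp : (1 - alpha) * (1 - x) - / lam > 0).
    { assert (E : / (lam * (1 - x)) = / lam / (1 - x)) by (field; split; lra).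
      rewrite E in C2.
      assert (/lam / (1 - x) < 1 - alpha) by lra.
      apply Rmult_lt_compat_r with (r := 1 - x) in H; auto.
      replace (/ lam / (1 - x) * (1 - x)) with (/lam) in H by (field; split; lra). lra. }
    unfold s, theta1_ss. rewrite Rmax_left by lra. lra. }
destruct (fix_exists x alpha lam s Hx Hal Hlam Hs Hc) as [th0s [Hth0 Efix]].
exists th0s. split; [auto|]. split; [auto|]. split.
{ intros t Ht Et. exact (fix_unique x alpha lam s t th0s (proj1 Hx) Hal Hlam Hs Ht Hth0 Et Efix). }
intros a b c d Hsol Ha0 Hb0 Hc0 Hd0.
set (S := th0s + s).
assert (HS : 0 < S) by (unfold S; lra).
set (as_ := lam*S/(1+lam*S)). set (bs := lam*th0s/(1+lam*th0s)).
assert (Has : 0 < as_ < 1).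
{ unfold as_. split. apply Rdiv_lt_0_compat; nra.
  apply Rmult_lt_reg_r with (1+lam*S). nra. unfold Rdiv. rewrite Rmult_assoc, Rinv_l; nra. }
assert (Hbs : 0 < bs < 1).
{ unfold bs. split. apply Rdiv_lt_0_compat; nra.
  apply Rmult_lt_reg_r with (1+lam*th0s). nra. unfold Rdiv. rewrite Rmult_assoc, Rinv_l; nra. }
assert (Eqa : (1-as_)*(INR k*nu)*(th0s+s) = as_*delta).
{ fold S. unfold as_, lam. field. repeat split; intro; nra. }
assert (Eqb : (1-bs)*(INR k*nu)*th0s = bs*delta).
{ unfold bs, lam. field. repeat split; intro; nra. }
assert (Eth : th0s = x*alpha*as_ + x*(1-alpha)*bs + (1-x)*alpha*as_).
{ rewrite <- Efix at 1. unfold Defs.H, as_, bs, S. ring. }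
destruct (stage1 x alpha (INR k) nu delta a b c d Hx Hal HK Hdl Hsol Hd0) as [m0d [Bd [Hm0d [HBd [Hg1 Hev1]]]]].
fold lam s in Hg1, Hev1.
set (m0 := Rmin (Rmin (1/2) m0d) (Rmin (a 0) (Rmin (b 0) (c 0)))).
assert (Hm0a : m0 <= 1/2) by (eapply Rle_trans; [apply Rmin_l|apply Rmin_l]).
assert (Hm0b : m0 <= m0d) by (eapply Rle_trans; [apply Rmin_l|apply Rmin_r]).
assert (Hm0c : m0 <= a 0) by (eapply Rle_trans; [apply Rmin_r|apply Rmin_l]).
assert (Hm0d' : m0 <= b 0) by (eapply Rle_trans; [apply Rmin_r|]; eapply Rle_trans; [apply Rmin_r|apply Rmin_l]).
assert (Hm0e : m0 <= c 0) by (eapply Rle_trans; [apply Rmin_r|]; eapply Rle_trans; [apply Rmin_r|apply Rmin_r]).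
assert (Hm0 : 0 < m0) by (unfold m0; repeat apply Rmin_pos; lra).
set (M0 := 2 + /as_ + /bs + Bd/(as_*S)).
assert (Hias : 0 < /as_) by (apply Rinv_0_lt_compat; lra).
assert (Hibs : 0 < /bs) by (apply Rinv_0_lt_compat; lra).
assert (HaS : 0 < as_*S) by (apply Rmult_lt_0_compat; lra).
assert (HBdS : 0 <= Bd/(as_*S)) by (apply Rdiv_le_0_compat; lra).
assert (HM0 : 1 < M0) by (unfold M0; lra).
assert (HM0a : 1 <= M0 * as_).
{ assert (/as_ * as_ = 1) by (field; lra). assert (/as_ <= M0) by (unfold M0; lra).
  assert (/as_ * as_ <= M0 * as_) by (apply Rmult_le_compat_r; lra). lra. }
assert (HM0b : 1 <= M0 * bs).
{ assert (/bs * bs = 1) by (field; lra). assert (/bs <= M0) by (unfold M0; lra).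
  assert (/bs * bs <= M0 * bs) by (apply Rmult_le_compat_r; lra). lra. }
assert (HBdlt : 0 <= Bd < (M0 - 1) * as_ * S).
{ split; auto. assert (E : Bd/(as_*S) * (as_*S) = Bd) by (field; split; lra).
  assert (Bd/(as_*S) < M0 - 1) by (unfold M0; lra).
  assert (Bd/(as_*S) * (as_*S) < (M0-1)*(as_*S)) by (apply Rmult_lt_compat_r; lra).
  replace ((M0 - 1) * as_ * S) with ((M0-1)*(as_*S)) by ring. lra. }
assert (Hwa : 0 <= x*alpha) by (apply Rmult_le_pos; lra).
assert (Hwb : 0 <= x*(1-alpha)) by (apply Rmult_le_pos; lra).
assert (Hwc : 0 <= (1-x)*alpha) by (apply Rmult_le_pos; lra).
assert (Hmas : m0*as_ <= a 0) by (assert (m0*as_ <= m0*1) by (apply Rmult_le_compat_l; lra); lra).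
assert (Hmbs : m0*bs <= b 0) by (assert (m0*bs <= m0*1) by (apply Rmult_le_compat_l; lra); lra).
assert (Hmcs : m0*as_ <= c 0) by (assert (m0*as_ <= m0*1) by (apply Rmult_le_compat_l; lra); lra).
destruct (stage2 x alpha (INR k) nu delta a b c d th0s s as_ bs 0 m0 m0 M0 M0 Bd Hx Hal HK Hdl Hsol
   Hth0 Hs Has Hbs Eqa Eqb Eth ltac:(lra) ltac:(lra) ltac:(lra) ltac:(lra) HBdlt) as [eg [Heg Hglob]].
{ intros t Ht. destruct (Hg1 t Ht) as [G1 G2]. split.
  - assert (m0 * s <= m0d * s) by (apply Rmult_le_compat_r; lra). lra.
  - assert (0 <= M0 * s) by (apply Rmult_le_pos; lra). lra. }
{ apply wle; lra. } { apply wle; lra. } { apply wle; lra. } { apply wle; lra. }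
{ apply wle; lra. } { apply wle; lra. }
apply lim_of_close.
apply (box_conv (fun t => theta0 x alpha (a t) (b t) (c t)) th0s m0 M0 Hth0 ltac:(lra) HM0).
intros m1 M1 Hm1 HM1.
set (eta := (M1 - 1) * as_ * S / 2).
assert (HX : 0 < (M1-1)*as_*S) by (apply Rmult_lt_0_compat; [apply Rmult_lt_0_compat|]; lra).
assert (Heta : 0 < eta) by (unfold eta; lra).
assert (Heta2 : eta < (M1 - 1) * as_ * S) by (unfold eta; lra).
assert (HsM1 : s <= M1 * s) by (rewrite <- (Rmult_1_l s) at 1; apply Rmult_le_compat_r; lra).
assert (Hclose : exists T0, 0 <= T0 /\ forall t, T0 <= t -> m1*s <= theta1 x alpha (d t) <= M1*s + eta).
{ destruct (Rle_lt_or_eq_dec 0 s Hs) as [Hsp|Hs0].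
  - set (e' := Rmin eta ((1-m1)*s)).
    assert (He'1 : e' <= eta) by apply Rmin_l. assert (He'2 : e' <= (1-m1)*s) by apply Rmin_r.
    assert (He' : 0 < e') by (apply Rmin_pos; [lra|apply Rmult_lt_0_compat; lra]).
    destruct (Hev1 e' He') as [T [HT HTt]]. exists T. split; auto.
    intros t Ht. specialize (HTt t Ht). split; lra.
  - destruct (Hev1 eta Heta) as [T [HT HTt]]. exists T. split; auto.
    intros t Ht. specialize (HTt t Ht). destruct (Hg1 t ltac:(lra)) as [G1 G2].
    rewrite <- Hs0 in *. rewrite Rmult_0_r in *. split; lra. }
destruct Hclose as [T0 [HT0 Hcl]].
destruct (Hglob T0 HT0) as [I1 [I2 [I3 [I4 [I5 I6]]]]]. rewrite !mov_const in I1, I2, I3, I4, I5, I6.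
destruct (stage2 x alpha (INR k) nu delta a b c d th0s s as_ bs T0 m0 m1 M0 M1 eta Hx Hal HK Hdl Hsol
   Hth0 Hs Has Hbs Eqa Eqb Eth HT0 ltac:(lra) ltac:(lra) ltac:(lra) (conj (Rlt_le _ _ Heta) Heta2) Hcl
   I1 I2 I3 I4 I5 I6) as [eps [Heps Hb]].
exists T0, eps. split; auto. intros t Ht.
destruct (Hb t Ht) as [J1 [J2 [J3 [J4 [J5 J6]]]]].
exact (theta0_bounds x alpha (a t) (b t) (c t) as_ bs th0s _ _ Eth J1 J2 J3 J4 J5 J6).
Qed.
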